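(* Assume (C1) and (C2). For all $u\in\mathcal{D}$ and $t\ge0$, $$I(u)\ge I(tu)+\frac{1-t^q}{q}\langle I'(u),u\rangle+\Big(\frac{1-t^p}{p}-\frac{1-t^q}{q}\Big)\|u\|^p.$$
   Context: Fix real numbers $p,q,r$ with $1<p<q$, $\frac p2$ a positive integer, and $r\ge1$, and functions $a,b,c:\mathbb{Z}\to(0,+\infty)$. Conditions: - (C1) There is $b_0>0$ with $b(n)\ge b_0$ for all $n$ and $b(n)\to+\infty$ as $|n|\to\infty$. - (C2) There is $c_0>0$ with $c(n)\le c_0$ for all $n$ and $\sum_n c(n)<+\infty$. Notation and spaces: - $\Delta u(n)=u(n+1)-u(n)$. - $E$ is the set of real sequences $u$ with $\|u\|:=\big(\sum_n[a(n)|\Delta u(n)|^p+b(n)|u(n)|^p]\big)^{1/p}<\infty$. - $\mathcal{D}=\{u\in E:\sum_n c(n)|u(n)|^q\ln|u(n)|^r<+\infty\}$, where terms with $u(n)=0$ are read as $0$. For $u,v\in\mathcal{D}$: - $I(u)=\frac1p\|u\|^p+\frac{r}{q^2}\sum_n c(n)|u(n)|^q-\frac1q\sum_n c(n)|u(n)|^q\ln|u(n)|^r$. - $\langle I'(u),v\rangle=\sum_n[a(n)|\Delta u(n)|^{p-2}\Delta u(n)\Delta v(n)+b(n)|u(n)|^{p-2}u(n)v(n)]-\sum_n c(n)|u(n)|^{q-2}u(n)v(n)\ln|u(n)|^r$. *)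

(* Defs.v *)
From Stdlib Require Import Reals ZArith.
From Coquelicot Require Import Coquelicot.
Open Scope R_scope.

(* x^y for x >= 0 and real y, with the convention 0^y = 0 (y > 0 in all uses;
   where y = p-2 may be 0, the factor is multiplied by the base, which is 0). *)
Definition rpow (x y : R) : R := if Rle_dec x 0 then 0 else Rpower x y.

Definition Zsummable (f : Z -> R) : Prop :=
  ex_series (fun n : nat => Rabs (f (Z.of_nat n))) /\
  ex_series (fun n : nat => Rabs (f (- Z.of_nat (S n))%Z)).

Definition Zsum (f : Z -> R) : R :=
  Series (fun n : nat => f (Z.of_nat n)) +
  Series (fun n : nat => f (- Z.of_nat (S n))%Z).

Definition tends_to_infty_Z (f : Z -> R) : Prop :=
  forall M : R, exists N : nat, forall n : Z, (Z.of_nat N < Z.abs n)%Z -> M < f n.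

Definition Delta (u : Z -> R) (n : Z) : R := u (n + 1)%Z - u n.

Definition norm_term (a b : Z -> R) (p : R) (u : Z -> R) (n : Z) : R :=
  a n * rpow (Rabs (Delta u n)) p + b n * rpow (Rabs (u n)) p.

Definition inE (a b : Z -> R) (p : R) (u : Z -> R) : Prop :=
  Zsummable (norm_term a b p u).

Definition normE (a b : Z -> R) (p : R) (u : Z -> R) : R :=
  rpow (Zsum (norm_term a b p u)) (/ p).

Definition log_term (c : Z -> R) (q r : R) (u : Z -> R) (n : Z) : R :=
  if Req_EM_T (u n) 0 then 0
  else c n * rpow (Rabs (u n)) q * ln (rpow (Rabs (u n)) r).

(* u in D (the series is required to converge absolutely) *)
Definition inD (a b c : Z -> R) (p q r : R) (u : Z -> R) : Prop :=
  inE a b p u /\ Zsummable (log_term c q r u).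

Definition Ifun (a b c : Z -> R) (p q r : R) (u : Z -> R) : R :=
  / p * rpow (normE a b p u) p
  + r / (q ^ 2) * Zsum (fun n => c n * rpow (Rabs (u n)) q)
  - / q * Zsum (log_term c q r u).

Definition dI (a b c : Z -> R) (p q r : R) (u v : Z -> R) : R :=
  Zsum (fun n => a n * (rpow (Rabs (Delta u n)) (p - 2) * Delta u n) * Delta v n
               + b n * (rpow (Rabs (u n)) (p - 2) * u n) * v n)
  - Zsum (fun n => c n * (rpow (Rabs (u n)) (q - 2) * u n) * v n
                   * ln (rpow (Rabs (u n)) r)).

Definition scale (t : R) (u : Z -> R) : Z -> R := fun n => t * u n.

(* Main.v *)
Require Import Defs.
From Stdlib Require Import Reals ZArith Lra.
From Coquelicot Require Import Coquelicot.
Open Scope R_scope.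

Lemma Zsum_ext f g : (forall n, f n = g n) -> Zsum f = Zsum g.
Proof. intros H; unfold Zsum; rewrite (Series_ext _ _ (fun n => H _)), (Series_ext _ _ (fun n => H _)); reflexivity. Qed.

Lemma Zsum_scal k f : Zsum (fun n => k * f n) = k * Zsum f.
Proof. unfold Zsum; rewrite !Series_scal_l; ring. Qed.

Lemma Zsum_plus f g : Zsummable f -> Zsummable g -> Zsum (fun n => f n + g n) = Zsum f + Zsum g.
Proof. intros [F1 F2] [G1 G2]; unfold Zsum.
  rewrite Series_plus by (apply ex_series_Rabs; assumption).
  rewrite (Series_plus (fun n => f (- Z.of_nat (S n))%Z)) by (apply ex_series_Rabs; assumption). ring. Qed.

Lemma Series_nonneg (f : nat -> R) : (forall n, 0 <= f n) -> ex_series f -> 0 <= Series f.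
Proof. intros H E. replace 0 with (Series (fun n => 0 * f n)).
  apply Series_le; auto. intros; split; [lra|]. rewrite Rmult_0_l; auto.
  rewrite Series_scal_l; ring. Qed.

Lemma Zsum_nonneg f : (forall n, 0 <= f n) -> Zsummable f -> 0 <= Zsum f.
Proof. intros H [F1 F2]; unfold Zsum.
  apply Rplus_le_le_0_compat; apply Series_nonneg; auto; apply ex_series_Rabs; auto. Qed.

Lemma Zsummable_le f g : Zsummable g -> (forall n, Rabs (f n) <= Rabs (g n)) -> Zsummable f.
Proof. intros [G1 G2] H; split.
  - refine (ex_series_le (V:=R_CompleteNormedModule) _ _ _ G1). intros n.
    change norm with Rabs; simpl; rewrite Rabs_Rabsolu; auto.
  - refine (ex_series_le (V:=R_CompleteNormedModule) _ _ _ G2). intros n.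
    change norm with Rabs; simpl; rewrite Rabs_Rabsolu; auto. Qed.

Lemma Zsummable_plus f g : Zsummable f -> Zsummable g -> Zsummable (fun n => Rabs (f n) + Rabs (g n)).
Proof. intros [F1 F2] [G1 G2]; split.
  - refine (ex_series_le (V:=R_CompleteNormedModule) _ _ _ (ex_series_plus (V:=R_NormedModule) _ _ F1 G1)).
    intros n; change norm with Rabs; change plus with Rplus; simpl;
    rewrite Rabs_Rabsolu, Rabs_pos_eq; [lra|]; apply Rplus_le_le_0_compat; apply Rabs_pos.
  - refine (ex_series_le (V:=R_CompleteNormedModule) _ _ _ (ex_series_plus (V:=R_NormedModule) _ _ F2 G2)).
    intros n; change norm with Rabs; change plus with Rplus; simpl;
    rewrite Rabs_Rabsolu, Rabs_pos_eq; [lra|]; apply Rplus_le_le_0_compat; apply Rabs_pos. Qed.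

Lemma Zsummable_scal k f : Zsummable f -> Zsummable (fun n => k * f n).
Proof. intros [F1 F2]; split.
  - refine (ex_series_le (V:=R_CompleteNormedModule) _ _ _ (ex_series_scal_l (V:=R_NormedModule) (Rabs k) _ F1)).
    intros n; change norm with Rabs; change scal with Rmult; simpl. rewrite Rabs_Rabsolu, Rabs_mult. lra.
  - refine (ex_series_le (V:=R_CompleteNormedModule) _ _ _ (ex_series_scal_l (V:=R_NormedModule) (Rabs k) _ F2)).
    intros n; change norm with Rabs; change scal with Rmult; simpl. rewrite Rabs_Rabsolu, Rabs_mult. lra. Qed.

Lemma rpow_pos_eq x y : 0 < x -> rpow x y = Rpower x y.
Proof. intros; unfold rpow; destruct (Rle_dec x 0); [lra|auto]. Qed.

Lemma rpow_0 y : rpow 0 y = 0.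
Proof. unfold rpow; destruct (Rle_dec 0 0); lra. Qed.

Lemma rpow_nonneg x y : 0 <= rpow x y.
Proof. unfold rpow; destruct (Rle_dec x 0); [lra|]. unfold Rpower; left; apply exp_pos. Qed.

Lemma rpow_mul t x y : 0<=t -> 0<=x -> rpow (t*x) y = rpow t y * rpow x y.
Proof. intros. unfold rpow. destruct (Rle_dec t 0); destruct (Rle_dec x 0); destruct (Rle_dec (t*x) 0);
  try ring; try (exfalso; nra). symmetry; apply Rpower_mult_distr; lra. Qed.

Lemma rpow_sq k x y : k * (rpow (Rabs x) (y-2) * x) * x = k * rpow (Rabs x) y.
Proof. destruct (Req_dec x 0) as [->|Hx].
  - rewrite Rabs_R0, !rpow_0; ring.
  - assert (Ha : 0 < Rabs x) by (apply Rabs_pos_lt; auto).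
    rewrite !rpow_pos_eq by auto.
    replace (k * (Rpower (Rabs x) (y - 2) * x) * x) with (k * (Rpower (Rabs x) (y - 2) * (Rabs x * Rabs x))).
    + replace y with ((y-2) + 1 + 1) at 2 by ring. rewrite !Rpower_plus, Rpower_1 by auto. ring.
    + rewrite <- Rabs_mult, (Rabs_pos_eq (x*x)) by nra. ring. Qed.

Lemma exp_ineq t q : 0 <= t -> 0 <= 1 - rpow t q + q * rpow t q * ln t.
Proof. intros Ht. destruct (Req_dec t 0) as [->|Hn].
  - rewrite rpow_0. lra.
  - rewrite rpow_pos_eq by lra. unfold Rpower.
    set (y := q * ln t). replace (q * exp y * ln t) with (y * exp y) by (unfold y; ring).
    pose proof (exp_ineq1_le (-y)). pose proof (exp_pos y).
    assert (exp (-y) * exp y = 1) by (rewrite <- exp_plus; replace (-y+y) with 0 by ring; apply exp_0).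
    nra. Qed.

Lemma normE_pow a b p v : 0 < p -> 0 <= Zsum (norm_term a b p v) ->
  rpow (normE a b p v) p = Zsum (norm_term a b p v).
Proof. intros Hp HN. unfold normE. set (N := Zsum (norm_term a b p v)) in *.
  destruct (Req_dec N 0) as [E|E].
  - rewrite E, !rpow_0; auto.
  - assert (0 < N) by lra. rewrite (rpow_pos_eq N) by auto.
    rewrite rpow_pos_eq by (unfold Rpower; apply exp_pos).
    rewrite Rpower_mult. replace (/p * p) with 1 by (field; lra). apply Rpower_1; auto. Qed.

Lemma norm_term_scale a b p u t n : 0 <= t ->
  norm_term a b p (scale t u) n = rpow t p * norm_term a b p u n.
Proof. intros Ht. unfold norm_term, Defs.Delta, scale.
  replace (t * u (n+1)%Z - t * u n) with (t * (u (n+1)%Z - u n)) by ring.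
  rewrite !Rabs_mult, (Rabs_pos_eq t) by auto.
  rewrite !rpow_mul by (auto; apply Rabs_pos). ring. Qed.

Lemma cterm_scale (c : Z -> R) q u t n : 0 <= t ->
  c n * rpow (Rabs (scale t u n)) q = rpow t q * (c n * rpow (Rabs (u n)) q).
Proof. intros Ht. unfold scale. rewrite Rabs_mult, (Rabs_pos_eq t) by auto.
  rewrite rpow_mul by (auto; apply Rabs_pos). ring. Qed.

Lemma log_term_scale c q r u t n : 0 <= t ->
  log_term c q r (scale t u) n =
  rpow t q * (log_term c q r u n + r * ln t * (c n * rpow (Rabs (u n)) q)).
Proof. intros Ht. destruct (Req_dec t 0) as [->|Htn].
  - unfold log_term, scale. rewrite rpow_0. destruct (Req_EM_T (0 * u n) 0); [ring|]. exfalso; lra.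
  - unfold log_term, scale.
    destruct (Req_EM_T (t * u n) 0) as [E1|E1]; destruct (Req_EM_T (u n) 0) as [E2|E2].
    + rewrite E2, Rabs_R0, rpow_0; ring.
    + exfalso. apply Rmult_integral in E1; lra.
    + exfalso. rewrite E2 in E1. lra.
    + assert (0 < Rabs (u n)) by (apply Rabs_pos_lt; auto).
      rewrite Rabs_mult, (Rabs_pos_eq t) by auto.
      rewrite !rpow_mul by (auto; apply Rabs_pos).
      rewrite !(rpow_pos_eq t) by lra. rewrite !(rpow_pos_eq (Rabs (u n))) by lra.
      rewrite ln_mult by (unfold Rpower; apply exp_pos). rewrite ln_Rpower. ring. Qed.

Lemma cterm_bound (c : Z -> R) q r u n : 0 < q -> 1 <= r -> 0 < c n ->
  Rabs (c n * rpow (Rabs (u n)) q) <=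
  Rabs (Rabs (log_term c q r u n) + Rabs (exp (q/r) * c n)).
Proof. intros Hq Hr Hc.
  assert (HA : 0 <= c n * rpow (Rabs (u n)) q) by (pose proof (rpow_nonneg (Rabs (u n)) q); nra).
  pose proof (Rabs_pos (log_term c q r u n)). pose proof (exp_pos (q/r)).
  rewrite (Rabs_pos_eq (Rabs _ + _)) by (pose proof (Rabs_pos (exp (q / r) * c n)); lra).
  rewrite (Rabs_pos_eq (exp _ * _)) by nra. rewrite Rabs_pos_eq by auto.
  unfold log_term. destruct (Req_EM_T (u n) 0) as [E|E].
  - rewrite E, Rabs_R0, rpow_0. nra.
  - assert (0 < Rabs (u n)) by (apply Rabs_pos_lt; auto).
    rewrite !rpow_pos_eq by auto.
    set (X := Rabs (u n)) in *.
    assert (HP : 0 < Rpower X r) by (unfold Rpower; apply exp_pos).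
    destruct (Rle_dec (exp 1) (Rpower X r)) as [Hb|Hb].
    + assert (1 <= ln (Rpower X r)).
      { rewrite <- (ln_exp 1) at 1. apply ln_le; auto. apply exp_pos. }
      assert (HX : 0 < Rpower X q) by (unfold Rpower; apply exp_pos).
      rewrite Rabs_pos_eq by (apply Rmult_le_pos; nra). assert (c n * Rpower X q <= c n * Rpower X q * ln (Rpower X r)) by (pose proof (Rmult_le_compat_l (c n * Rpower X q) 1 _ ltac:(nra) H2); lra). nra.
    + assert (Rpower X q <= exp (q / r)).
      { replace (Rpower X q) with (Rpower (Rpower X r) (q/r)).
        2:{ rewrite Rpower_mult. f_equal. field. lra. }
        replace (exp (q/r)) with (Rpower (exp 1) (q/r)).
        2:{ unfold Rpower. rewrite ln_exp. f_equal; ring. }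
        apply Rle_Rpower_l. apply Rlt_le; apply Rdiv_lt_0_compat; lra. split; auto; lra. }
      pose proof (Rabs_pos (c n * Rpower X q * ln (Rpower X r))). pose proof (Rmult_le_compat_l (c n) _ _ (Rlt_le _ _ Hc) H2). lra. Qed.

Theorem corollary2p3 (p q r : R) (a b c : Z -> R)
  (hp1 : 1 < p) (hpq : p < q)
  (hp2 : exists k : nat, (1 <= k)%nat /\ p / 2 = INR k)
  (hr : 1 <= r)
  (ha : forall n, 0 < a n) (hb : forall n, 0 < b n) (hc : forall n, 0 < c n)
  (C1 : exists b0 : R, 0 < b0 /\ (forall n, b0 <= b n) /\ tends_to_infty_Z b)
  (C2 : exists c0 : R, 0 < c0 /\ (forall n, c n <= c0) /\ Zsummable c)
  (u : Z -> R) (hu : inD a b c p q r u) (t : R) (ht : 0 <= t) :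
  Ifun a b c p q r u >=
    Ifun a b c p q r (scale t u)
    + (1 - rpow t q) / q * dI a b c p q r u u
    + ((1 - rpow t p) / p - (1 - rpow t q) / q) * rpow (normE a b p u) p.
Proof.
  destruct hu as [hE hL]. destruct C2 as [c0 [_ [_ hcs]]].
  assert (hq : 0 < q) by lra.
  assert (HS : Zsummable (fun n => c n * rpow (Rabs (u n)) q)).
  { apply (Zsummable_le _ (fun n => Rabs (log_term c q r u n) + Rabs (exp (q/r) * c n))).
    - apply Zsummable_plus; auto. apply Zsummable_scal; auto.
    - intros n; apply cterm_bound; auto. }
  assert (HN0 : 0 <= Zsum (norm_term a b p u)).
  { apply Zsum_nonneg; auto. intros n; unfold norm_term.
    pose proof (ha n); pose proof (hb n).
    pose proof (rpow_nonneg (Rabs (Defs.Delta u n)) p); pose proof (rpow_nonneg (Rabs (u n)) p). nra. }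
  assert (HS0 : 0 <= Zsum (fun n => c n * rpow (Rabs (u n)) q)).
  { apply Zsum_nonneg; auto. intros n. pose proof (hc n); pose proof (rpow_nonneg (Rabs (u n)) q). nra. }
  set (N := Zsum (norm_term a b p u)) in *.
  set (S2 := Zsum (fun n => c n * rpow (Rabs (u n)) q)) in *.
  set (L := Zsum (log_term c q r u)).
  assert (E1 : rpow (normE a b p u) p = N) by (apply normE_pow; [lra| exact HN0]).
  assert (E2 : Zsum (norm_term a b p (scale t u)) = rpow t p * N).
  { rewrite (Zsum_ext _ _ (fun n => norm_term_scale a b p u t n ht)). apply Zsum_scal. }
  assert (E3 : rpow (normE a b p (scale t u)) p = rpow t p * N).
  { rewrite normE_pow by (try lra; rewrite E2; apply Rmult_le_pos; auto; apply rpow_nonneg). auto. }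
  assert (E4 : Zsum (fun n => c n * rpow (Rabs (scale t u n)) q) = rpow t q * S2).
  { rewrite (Zsum_ext _ _ (fun n => cterm_scale c q u t n ht)). apply Zsum_scal. }
  assert (E5 : Zsum (log_term c q r (scale t u)) = rpow t q * (L + r * ln t * S2)).
  { rewrite (Zsum_ext _ _ (fun n => log_term_scale c q r u t n ht)). rewrite Zsum_scal.
    rewrite Zsum_plus; auto. 2: apply Zsummable_scal; auto. rewrite Zsum_scal. reflexivity. }
  assert (E6 : dI a b c p q r u u = N - L).
  { unfold dI. f_equal.
    - apply Zsum_ext. intros n. rewrite !rpow_sq. reflexivity.
    - apply Zsum_ext. intros n. rewrite rpow_sq. unfold log_term.
      destruct (Req_EM_T (u n) 0) as [E|E]; [rewrite E, Rabs_R0, rpow_0; ring | reflexivity]. }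
  unfold Ifun. rewrite E1, E3, E4, E5, E6. fold L. fold S2.
  pose proof (exp_ineq t q ht).
  assert (0 <= r * S2 * (1 - rpow t q + q * rpow t q * ln t)).
  { apply Rmult_le_pos; auto. apply Rmult_le_pos; lra. }
  apply Rle_ge. apply Rminus_le.
  match goal with |- ?A - ?B <= 0 => replace (A - B) with (- (r * S2 * (1 - rpow t q + q * rpow t q * ln t)) / (q^2)) by (field; lra) end.
  assert (0 <= r * S2 * (1 - rpow t q + q * rpow t q * ln t) * / q^2) by (apply Rmult_le_pos; [auto| left; apply Rinv_0_lt_compat; nra]). unfold Rdiv. lra.
Qed.
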